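(* Let $n \in \mathbb{Z}_{\geqslant 2}$, $k \in \mathbb{Z}_{\geqslant 1}$ and let $q \geqslant 3$ be a prime number. Then $$v_q\left(\sigma_k(n)\right) = \sum_{\substack{p^{\alpha} \| n \\ p^{k} \equiv 1 \pmod q}} v_q(\alpha+1) \;+\; \sum_{\substack{p^{\alpha} \| n \\ p \ne q \\ p^k \not\equiv 1 \pmod q \\ \varpi_k \mid \alpha + 1}} \Bigl( v_q(\alpha+1) + v_q(k) + v_q\left(\Phi_{\varpi_1}(p)\right) \Bigr),$$ where both sums run over primes $p$ dividing $n$ (with $\alpha = v_p(n)$), $\varpi_1 := \operatorname{ord}_q(p)$ and $\varpi_k := \operatorname{ord}_q(p^k)$.
   Context: $\sigma_k(n) := \sum_{d \mid n} d^k$. $v_q$ denotes the $q$-adic valuation. For a prime $p$, $p^{\alpha} \| n$ means $p^\alpha \mid n$ and $p^{\alpha+1} \nmid n$, i.e. $\alpha = v_p(n)$. $\operatorname{ord}_q(a)$ is the multiplicative order of $a$ modulo $q$ (for $q \nmid a$). $\Phi_m(X)$ denotes the $m$th cyclotomic polynomial. *)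

(* Defs.v *)
From mathcomp Require Import all_boot all_order all_algebra all_field.
Set Implicit Arguments. Unset Strict Implicit. Unset Printing Implicit Defensive.
Import GRing.Theory Num.Theory.

Definition sigma (k n : nat) : nat := \sum_(d <- divisors n) d ^ k.

(* ord_q(a): multiplicative order of a modulo q, i.e. the least m >= 1 with
   a^m = 1 (mod q).  For q prime and q not dividing a, Fermat gives m <= q-1,
   so searching m in [1, q] finds it; (returns 0 if no such m <= q). *)
Definition ordq (q a : nat) : nat :=
  head 0%N [seq m <- iota 1 q | a ^ m == 1 %[mod q]].

Definition vPhi (q m p : nat) : nat :=
  logn q `|((Cyclotomic m).[p%:Z])%R|%N.

(* Main.v *)
Require Import Defs.
From mathcomp Require Import all_boot all_order all_algebra all_field.
From mathcomp Require Import zify ring.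
Set Implicit Arguments. Unset Strict Implicit. Unset Printing Implicit Defensive.
Import GRing.Theory Num.Theory.
Definition gs (y a : nat) := \sum_(0 <= i < a) y ^ i.

Lemma gsS y a : gs y a.+1 = gs y a + y ^ a.
Proof. by rewrite /gs big_nat_recr. Qed.

Lemma gs0 y : gs y 0 = 0.
Proof. by rewrite /gs big_geq. Qed.

Lemma gs_add y m n : gs y (m + n) = gs y m + y ^ m * gs y n.
Proof.
elim: n => [|n IH]; first by rewrite addn0 gs0 muln0 addn0.
by rewrite addnS !gsS IH expnD; ring.
Qed.

Lemma gs_mul y b j : gs y (b * j) = gs y b * gs (y ^ b) j.
Proof.
elim: j => [|j IH]; first by rewrite muln0 !gs0 muln0.
by rewrite mulnS addnC gs_add IH gsS -expnM; ring.
Qed.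

Lemma gs_geom x n : gs x.+1 n * x + 1 = x.+1 ^ n.
Proof.
elim: n => [|n IH]; first by rewrite gs0.
by rewrite gsS expnS -IH; ring.
Qed.

Lemma gs_gt0 y a : 0 < a -> 0 < gs y a.
Proof. by case: a => // a _; rewrite /gs big_nat_recl // expn0 addnC. Qed.

Lemma gs_recl y a : gs y a.+1 = 1 + y * gs y a.
Proof.
rewrite /gs big_nat_recl // expn0; congr (_ + _).
rewrite big_distrr /=; apply: eq_bigr => i _; by rewrite expnS.
Qed.

Lemma pow_lte t q i : exists c, (1 + t * q) ^ i = 1 + i * t * q + q ^ 2 * c.
Proof.
elim: i => [|i [c IH]]; first by exists 0; rewrite expn0; ring.
exists (i * t * t + c * (1 + t * q)); rewrite expnS IH; ring.
Qed.

Lemma gs_lte t q n : exists C, gs (1 + t * q) n = n + t * q * (\sum_(0 <= i < n) i) + q ^ 2 * C.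
Proof.
elim: n => [|n [C IH]]; first by exists 0; rewrite gs0 big_geq //; ring.
have [c Hc] := pow_lte t q n.
exists (C + c); rewrite gsS IH Hc big_nat_recr //=; ring.
Qed.

Lemma gs_mod q y n : y %% q = 1 -> gs y n = n %[mod q].
Proof.
move=> Hy; have [t ->] : exists t, y = 1 + t * q.
  by exists (y %/ q); rewrite {1}(divn_eq y q) Hy addnC.
have [C ->] := gs_lte t q n.
have -> : n + t * q * (\sum_(0 <= i < n) i) + q ^ 2 * C = n + (t * (\sum_(0 <= i < n) i) + q * C) * q by ring.
by rewrite addnC modnMDl.
Qed.

Lemma gs_q q z : prime q -> 2 < q -> z %% q = 1 -> logn q (gs z q) = 1.
Proof.
move=> pq q2 Hz; have [t ->] : exists t, z = 1 + t * q.
  by exists (z %/ q); rewrite {1}(divn_eq z q) Hz addnC.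
have [C ->] := gs_lte t q q.
have [r Hr] : exists r, \sum_(0 <= i < q) i = r * q.
  by apply/dvdnP; rewrite bin2_sum prime_dvd_bin // q2 andbT.
rewrite Hr.
have -> : q + t * q * (r * q) + q ^ 2 * C = q * (1 + (t * r + C) * q) by ring.
rewrite (lognM _ (prime_gt0 pq)) ?addn_gt0 // (logn_prime _ pq) eqxx logn_coprime //.
by rewrite prime_coprime // /dvdn addnC modnMDl modn_small ?prime_gt1.
Qed.

Lemma lte q y a : prime q -> 2 < q -> y %% q = 1 -> 0 < a ->
  logn q (gs y a) = logn q a.
Proof.
move=> pq q2 Hy; elim/ltn_ind: a => a IH a0.
case: (boolP (q %| a)) => [/dvdnP[b Hb]|nda]; last first.
  rewrite !logn_coprime // prime_coprime //.
  by rewrite /dvdn gs_mod.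
subst a; have b0 : 0 < b by move: a0; rewrite muln_gt0 => /andP[].
have q1 := prime_gt1 pq.
rewrite gs_mul (lognM _ (gs_gt0 _ b0) (gs_gt0 _ (prime_gt0 pq))) IH //; last by rewrite -{1}(muln1 b) ltn_pmul2l.
rewrite gs_q //; last by rewrite -modnXm Hy exp1n modn_small.
by rewrite (lognM _ b0 (prime_gt0 pq)) (logn_prime _ pq) eqxx.
Qed.


Lemma head_filter_iota (P : pred nat) n i : (exists j, i <= j < i + n /\ P j) ->
  let h := head 0 [seq m <- iota i n | P m] in
  [/\ i <= h < i + n, P h & forall j, i <= j < h -> ~~ P j].
Proof.
elim: n i => [|n IH] i [j [Hj Pj]] /=; first by lia.
case: (boolP (P i)) => Pi /=.
  split => //; first by lia.
  by move=> k; lia.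
have [|Hh Ph Hmin] := IH i.+1.
  exists j; split => //; case: (eqVneq j i) => [E|]; first by move: Pi; rewrite -E Pj.
  lia.
split => //; first by lia.
move=> k Hk; case: (eqVneq k i) => [->//|ne]; apply: Hmin; lia.
Qed.

Lemma totient_prime' p : prime p -> totient p = p.-1.
Proof. move=> pp; by rewrite -{1}(expn1 p) totient_pfactor // expn0 muln1. Qed.

Lemma ordqP q a : prime q -> coprime a q ->
  [/\ 0 < ordq q a < q, a ^ ordq q a = 1 %[mod q]
    & forall j, 0 < j < ordq q a -> a ^ j != 1 %[mod q]].
Proof.
move=> pq cq; have q1 := prime_gt1 pq.
have Hf : a ^ q.-1 == 1 %[mod q].
  by apply/eqP; rewrite -(totient_prime' pq) cyclic.Euler_exp_totient.
have [|H1 /eqP H2 H3] := @head_filter_iota (fun m => a ^ m == 1 %[mod q]) q 1.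
  exists q.-1; split => //; lia.
rewrite /ordq; split => //.
- apply/andP; split; first by lia.
  set h := head _ _ in H1 H2 H3 *.
  rewrite ltnNge; apply/negP => Hq.
  have := H3 q.-1; rewrite Hf; move/(_ _)/negP; apply; lia.
Qed.

Lemma ordq_dvd q a j : prime q -> coprime a q ->
  (a ^ j == 1 %[mod q]) = (ordq q a %| j).
Proof.
move=> pq cq; have [/andP[m0 mq] Hm Hmin] := ordqP pq cq.
set m := ordq q a in m0 mq Hm Hmin *.
have E : a ^ j = a ^ (j %% m) %[mod q].
  rewrite {1}(divn_eq j m) expnD [_ %/ _ * _]mulnC expnM -modnMml -modnXm Hm.
  by rewrite modnXm exp1n modnMml mul1n.
rewrite E /dvdn; case: (posnP (j %% m)) => [->|jm]; first by rewrite expn0 !eqxx.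
rewrite (negbTE (Hmin _ _)) ?jm ?ltn_pmod //.

Qed.

Definition fPhi (d p : nat) : nat := `|((Cyclotomic d).[p%:Z])%R|%N.

Lemma prod_fPhi p j : 0 < p -> 0 < j -> p ^ j - 1 = \prod_(d <- divisors j) fPhi d p.
Proof.
move=> p0 j0.
have H : (((p%:Z) ^+ j - 1) = \prod_(d <- divisors j) (Cyclotomic d).[p%:Z])%R.
  rewrite -horner_prod prod_Cyclotomic //.
  by rewrite !hornerE.
have Hn : `|(((p%:Z) ^+ j - 1))%R|%N = (p ^ j - 1)%N.
  rewrite -natz -natrX natz.
  have -> : (((p ^ j)%N%:Z - 1) = (p ^ j - 1)%N%:Z)%R by rewrite subzn // expn_gt0 p0.
  by [].
rewrite -Hn H /fPhi.
by rewrite (big_morph (fun x : int => `|x|%N) abszM (absz1)).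
Qed.

Lemma logn_prod q (s : seq nat) (F : nat -> nat) :
  (forall i, i \in s -> 0 < F i) ->
  logn q (\prod_(i <- s) F i) = \sum_(i <- s) logn q (F i).
Proof.
elim: s => [|x s IH] H; first by rewrite !big_nil logn1.
rewrite !big_cons lognM ?H ?mem_head // ?IH //.
- by move=> i Hi; apply: H; rewrite inE Hi orbT.
rewrite big_seq_cond; apply: (big_ind (fun x => 0 < x)) => //.
- by move=> a b a0 b0; rewrite muln_gt0 a0.
- by move=> i /andP[Hi _]; apply: H; rewrite inE Hi orbT.
Qed.



Lemma vPhi_eq q p : prime q -> prime p -> coprime p q ->
  logn q (fPhi (ordq q p) p) = logn q (p ^ ordq q p - 1).
Proof.
move=> pq pp cpq; have [/andP[m0 mq] Hm Hmin] := ordqP pq cpq.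
set m := ordq q p in m0 mq Hm Hmin *.
have p1 := prime_gt1 pp.
have pos j : 0 < j -> forall d, d \in divisors j -> 0 < fPhi d p.
  move=> j0 d Hd; have := prod_fPhi (prime_gt0 pp) j0.
  rewrite (big_rem d Hd) /= => E.
  have : 0 < p ^ j - 1 by rewrite subn_gt0 -{1}(expn0 p) ltn_exp2l.
  by rewrite E muln_gt0 => /andP[].
rewrite (prod_fPhi (prime_gt0 pp) m0) logn_prod; last exact: pos.
rewrite (big_rem m) ?divisors_id //= big1_seq ?addn0 //.
move=> d /andP[_]; rewrite mem_rem_uniq ?divisors_uniq // inE => /andP[dm Hd].
have dm' : d %| m by rewrite dvdn_divisors.
have d0 : 0 < d by apply: dvdn_gt0 dm'.
have dltm : d < m by rewrite ltn_neqAle dm dvdn_leq.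
apply: logn_coprime; rewrite prime_coprime //; apply/negP => qd.
have : q %| p ^ d - 1.
  rewrite (prod_fPhi (prime_gt0 pp) d0) (big_rem d) ?divisors_id //=.
  exact: dvdn_mulr.
move/dvdnP => [k Hk].
have : p ^ d = 1 %[mod q].
  have -> : p ^ d = k * q + 1.
    rewrite -Hk subnK //; by rewrite expn_gt0 prime_gt0.
  by rewrite modnMDl.
by move/eqP; apply/negP; apply: Hmin; rewrite d0.
Qed.


Lemma divisorsM m n : 0 < m -> 0 < n -> coprime m n ->
  perm_eq (divisors (m * n)) [seq d1 * d2 | d1 <- divisors m, d2 <- divisors n].
Proof.
move=> m0 n0 cmn; have mn0 : 0 < m * n by rewrite muln_gt0 m0.
apply: uniq_perm; first exact: divisors_uniq.
- apply: allpairs_uniq; try exact: divisors_uniq.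
  move=> [d1 d2] [e1 e2] /allpairsP[[x y] [Hx Hy [-> ->]]] /allpairsP[[x' y'] [Hx' Hy' [-> ->]]] /= E.
  rewrite -!dvdn_divisors // in Hx Hy Hx' Hy'.
  have G1 u v u' v' : u %| m -> v %| n -> u' %| m -> v' %| n -> u * v = u' * v' -> u %| u'.
    move=> Hu Hv Hu' Hv' Euv.
    have cuv : coprime u v' by apply: (coprime_dvdl Hu); apply: (coprime_dvdr Hv').
    by rewrite -(Gauss_dvdl _ cuv) -Euv dvdn_mulr.
  have ex : x = x' by apply/eqP; rewrite eqn_dvd (G1 _ _ _ _ Hx Hy Hx' Hy' E) (G1 _ _ _ _ Hx' Hy' Hx Hy (esym E)).
  subst x'; congr (_, _); apply/eqP; rewrite -(eqn_pmul2l (dvdn_gt0 m0 Hx)); exact/eqP.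
move=> d; rewrite -dvdn_divisors //; apply/idP/allpairsP.
- move=> dmn; set d1 := gcdn d m; exists (d1, d %/ d1) => /=.
  have d10 : 0 < d1 by rewrite gcdn_gt0 m0 orbT.
  have d1d : d1 %| d by apply: dvdn_gcdl.
  have d1m : d1 %| m by apply: dvdn_gcdr.
  rewrite -!dvdn_divisors // d1m [d1 * _]mulnC divnK //; split => //.
  have cop : coprime (d %/ d1) (m %/ d1).
    rewrite /coprime -(eqn_pmul2l d10) muln1 muln_gcdr ![d1 * (_ %/ d1)]mulnC !divnK //.
  rewrite -(Gauss_dvdr n cop) -(dvdn_pmul2l d10) [d1 * (d %/ d1)]mulnC divnK // mulnA [d1 * (m %/ d1)]mulnC divnK //.
- move=> H. case: H => p Hp. destruct Hp as [H1 H2 E]. rewrite E.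
  rewrite -dvdn_divisors // in H1; rewrite -dvdn_divisors // in H2.
  exact: (dvdn_mul H1 H2).
Qed.

Lemma sigmaM k m n : 0 < m -> 0 < n -> coprime m n ->
  sigma k (m * n) = sigma k m * sigma k n.
Proof.
move=> m0 n0 cmn; rewrite /sigma (perm_big _ (divisorsM m0 n0 cmn)) /=.
rewrite big_allpairs_dep /= big_distrl /=; apply: eq_bigr => d1 _.
rewrite big_distrr /=; apply: eq_bigr => d2 _.
by rewrite expnMn.
Qed.



Lemma sigma_pow k p e : prime p -> sigma k (p ^ e) = gs (p ^ k) e.+1.
Proof.
move=> pp; have p1 := prime_gt1 pp.
have pe0 : 0 < p ^ e by rewrite expn_gt0 prime_gt0.
have P : perm_eq (divisors (p ^ e)) [seq p ^ i | i <- iota 0 e.+1].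
  apply: uniq_perm; first exact: divisors_uniq.
  - by rewrite map_inj_uniq ?iota_uniq //; apply: expnI.
  move=> d; rewrite -dvdn_divisors //; apply/(dvdn_pfactor _ _ pp)/mapP.
  + by case=> i ie ->; exists i => //; rewrite mem_iota; lia.
  + by case=> i; rewrite mem_iota => ie ->; exists i => //; lia.
rewrite /sigma (perm_big _ P) big_map /gs /index_iota subn0.
by apply: eq_bigr => i _; rewrite -!expnM mulnC.
Qed.

Lemma sigma_prod k (s : seq nat) (e : nat -> nat) :
  uniq s -> all prime s ->
  sigma k (\prod_(p <- s) p ^ e p) = \prod_(p <- s) gs (p ^ k) (e p).+1.
Proof.
elim: s => [|p s IH]; first by rewrite !big_nil /sigma (_ : divisors 1 = [:: 1]) // big_seq1 exp1n.
rewrite /= => /andP[ps us] /andP[pp ps'].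
rewrite !big_cons sigmaM ?sigma_pow ?IH //.
- by rewrite expn_gt0 prime_gt0.
- rewrite big_seq; apply: (big_ind (fun x => 0 < x)) => // [a b a0 b0|r rs].
    by rewrite muln_gt0 a0.
  by rewrite expn_gt0 prime_gt0 //; apply: (allP ps').
- apply: coprimeXl; rewrite big_seq; apply: (big_ind (coprime p)) => // [|a b ca cb|r rs].
  + exact: coprimen1.
  + by rewrite coprimeMr ca.
  apply: coprimeXr; rewrite prime_coprime // dvdn_prime2 //; last exact: (allP ps').
  by apply/eqP => E; move: ps; rewrite E rs.
Qed.

Lemma nmod1 q x : 1 < q -> q %| x.+1 -> ~~ (x.+1 == 1 %[mod q]) -> True.
Proof. by []. Qed.

Lemma not_dvd_pred q y : prime q -> 0 < y -> ~~ (y == 1 %[mod q]) -> ~~ (q %| y.-1).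
Proof.
move=> pq y0 ny; apply/negP => /dvdnP[c Hc]; move/negP: ny; apply.
by rewrite -(prednK y0) Hc -addn1 modnMDl.
Qed.

Lemma local_term q p k a : prime q -> 2 < q -> prime p -> 0 < k -> 0 < a ->
  logn q (gs (p ^ k) a) =
  (if p ^ k == 1 %[mod q] then logn q a else 0) +
  (if [&& p != q, p ^ k != 1 %[mod q] & ordq q (p ^ k) %| a]
   then logn q a + logn q k + vPhi q (ordq q p) p else 0).
Proof.
move=> pq q2 pp k0 a0; have q1 := prime_gt1 pq; have p1 := prime_gt1 pp.
case: (eqVneq p q) => [E|npq].
  subst p; have H1 : (q ^ k == 1 %[mod q]) = false.
    by rewrite -(prednK k0) expnS modnMr modn_small.
  rewrite H1 /= logn_coprime // prime_coprime // -(prednK a0) gs_recl.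
  by rewrite -(prednK k0) expnS -mulnA mulnC /dvdn addnC modnMDl modn_small.
have cpq : coprime p q by rewrite prime_coprime // dvdn_prime2.
have y1 : 1 < p ^ k by rewrite -{1}(expn0 p) ltn_exp2l.
case: (boolP (p ^ k == 1 %[mod q])) => Hy /=.
  by rewrite addn0 lte // (eqP Hy) modn_small.
rewrite add0n.
have cyq : coprime (p ^ k) q by apply: coprimeXl.
set y := p ^ k in y1 Hy cyq *.
have Hg : logn q (gs y a) = logn q (y ^ a - 1).
  have := gs_geom y.-1 a; rewrite prednK ?(ltnW y1) // => G.
  rewrite -G addnK lognM ?gs_gt0 //; last by rewrite -subn1 subn_gt0.
  rewrite (@logn_coprime q y.-1) ?addn0 //.
  by rewrite prime_coprime // not_dvd_pred // ltnW.
rewrite Hg; case: ifP => Hd; last first.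
  rewrite logn_coprime // prime_coprime //.
  have -> : y ^ a - 1 = (y ^ a).-1 by rewrite subn1.
  apply: (not_dvd_pred pq); first by rewrite expn_gt0 ltnW.
  by rewrite ordq_dvd // Hd.
have Hya : y ^ a == 1 %[mod q] by rewrite ordq_dvd.
have : ordq q p %| k * a by rewrite -ordq_dvd // expnM.
have [/andP[m0 mq] Hm Hmin] := ordqP pq cpq.
set m := ordq q p in m0 mq Hm Hmin *.
case/dvdnP => c Hc.
have c0 : 0 < c by move: (muln_gt0 k a); rewrite k0 a0 Hc muln_gt0 => /andP[].
have z1 : 1 < p ^ m by rewrite -{1}(expn0 p) ltn_exp2l.
have -> : y ^ a - 1 = gs (p ^ m) c * (p ^ m).-1.
  have := gs_geom (p ^ m).-1 c; rewrite prednK ?(ltnW z1) // => G.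
  by rewrite /y -expnM Hc [c * m]mulnC expnM -G addnK.
rewrite lognM ?gs_gt0 //; last by rewrite -subn1 subn_gt0.
rewrite lte //; last by rewrite Hm modn_small.
rewrite /vPhi -/(fPhi m p) vPhi_eq // subn1.
have cm : coprime q m.
  rewrite prime_coprime //; apply/negP => /(dvdn_leq m0); lia.
have : logn q (k * a) = logn q (c * m) by rewrite Hc.
rewrite !lognM // ?prime_gt0 // (logn_coprime cm) addn0 => E.
rewrite -/m; lia.
Qed.

Theorem theorem1 (n k q : nat) :
  (2 <= n)%N -> (1 <= k)%N -> prime q -> (3 <= q)%N ->
  logn q (sigma k n) =
    (\sum_(p <- primes n | p ^ k == 1 %[mod q]) logn q (logn p n).+1
   + \sum_(p <- primes n | [&& p != q, p ^ k != 1 %[mod q]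
                             & ordq q (p ^ k) %| (logn p n).+1])
        (logn q (logn p n).+1 + logn q k + vPhi q (ordq q p) p))%N.
Proof.
move=> n2 k1 pq q3.
have n0 : 0 < n by apply: leq_trans n2.
have En : n = \prod_(p <- primes n) p ^ logn p n.
  by rewrite {1}(prod_prime_decomp n0) prime_decompE big_map.
rewrite {1}En sigma_prod ?primes_uniq ?all_prime_primes //.
rewrite logn_prod; last by move=> p _; apply: gs_gt0.
rewrite [X in _ = X + _]big_mkcond [X in _ = _ + X]big_mkcond -big_split /=.
apply: eq_big_seq => p; rewrite mem_primes => /and3P[pp _ _].
exact: local_term.
Qed.
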